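(* For positive integers $a,b$ define $$c_l(a,a+1;b)=1+\frac{1}{a+2[b,a+1,b]},\quad c_r(a,a+1;b)=1+\frac{1}{a+2[b+1,a]},$$ $$c_l(a;b,b+1)=1+\frac{1}{b+2[a,b+1,a]},\quad c_r(a;b,b+1)=1+\frac{1}{b+2[a+1,b]}.$$ Then for every integer $a\ge1$, $$c_l(a,a+1;2a+1)>c_r(a;2a+1,2a+2)^2,$$ and for every integer $a\ge2$, $$c_r(a,a+1;2a)<c_l(a;2a,2a+1)^2.$$
   Context: $[x_1,\ldots,x_k]$ denotes the finite continued fraction $\cfrac{1}{x_1+\cfrac{1}{\ddots+\cfrac1{x_k}}}$. (In the paper these inequalities are the defining conditions for the $(1,2)$-variations $((a\to a+1),(2a+2\to2a+1),(2a+2\to2a+1))$ and $((a+1\to a),(2a\to2a+1),(2a\to2a+1))$ to be ''absolutely increasing''.) *)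

(* Defs.v *)
From mathcomp Require Import all_boot all_order all_algebra.
Set Implicit Arguments. Unset Strict Implicit. Unset Printing Implicit Defensive.
Import Order.TTheory GRing.Theory Num.Theory.
Local Open Scope ring_scope.

(* cf [:: x1; ...; xk] = 1/(x1 + 1/(... + 1/xk)); cf [::] = 0, so that
   cf (x :: s) = 1 / (x + cf s) and cf [:: x] = 1/x. *)
Fixpoint cf (s : seq rat) : rat :=
  match s with
  | [::] => 0
  | x :: s' => (x + cf s')^-1
  end.

Definition cl1 (a b : nat) : rat :=
  1 + (a%:R + 2 * cf [:: b%:R; a.+1%:R; b%:R])^-1.
Definition cr1 (a b : nat) : rat :=
  1 + (a%:R + 2 * cf [:: b.+1%:R; a%:R])^-1.
Definition cl2 (a b : nat) : rat :=
  1 + (b%:R + 2 * cf [:: a%:R; b.+1%:R; a%:R])^-1.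
Definition cr2 (a b : nat) : rat :=
  1 + (b%:R + 2 * cf [:: a.+1%:R; b%:R])^-1.

(* Main.v *)
Require Import Defs.
From mathcomp Require Import all_boot all_order all_algebra.
From mathcomp Require Import ring lra.
Import Order.TTheory GRing.Theory Num.Theory.
Local Open Scope ring_scope.

Ltac nn := repeat first [ lra | apply: addr_ge0 | apply: mulr_ge0 ].
Ltac pp := apply: ltr_wpDr; [nn | lra].
Ltac nz := repeat (apply/andP; split); rewrite gt_eqF //; (lra || nra).

Lemma L1 (t x y b E F G H : rat) : 0 <= t -> x = t + 1 -> y = x + 1 -> b = 2 * x + 1 ->
  E = (x+1)*b+1 -> F = b * (E+2) -> G = x*b*(E+1) + 2*E -> H = b * (E+1) ->
  (1 + (b + 2 * cf [:: y; b])^-1) ^+ 2 <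
  1 + (x + 2 * cf [:: b; y; b])^-1.
Proof.
move=> t0 ex -> eb eE eF eG eH.
have x1 : 1 <= x by rewrite ex; lra.
have b3 : 3 <= b by rewrite eb; lra.
have E0 : 0 < E by rewrite eE; apply: addr_gt0; [apply: mulr_gt0|]; lra.
have bE : 0 < b * E by apply: mulr_gt0; lra.
have F0 : 0 < F by rewrite eF; apply: mulr_gt0; lra.
have G0 : 0 < G by rewrite eG; apply: addr_gt0; [apply: mulr_gt0; [apply: mulr_gt0|]|]; lra.
have H0 : 0 < H by rewrite eH; apply: mulr_gt0; lra.
have h1 : cf [:: x+1; b] = b / E.
  rewrite /= addr0 eE; field; nz.
have h2 : cf [:: b; x+1; b] = E / H.
  rewrite (_ : cf [:: b; x+1; b] = (b + cf [:: x+1; b])^-1) // h1 eH; field; nz.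
rewrite h2 h1.
have -> : 1 + (b + 2 * (b / E))^-1 = (F + E) / F.
  rewrite eF; field; nz.
have -> : 1 + (x + 2 * (E / H))^-1 = (G + H) / G.
  rewrite eG eH; field; nz.
rewrite -subr_gt0.
have -> : (G + H) / G - ((F + E) / F) ^+ 2 = (F * F * (G + H) - (F + E) * (F + E) * G) / (G * F * F).
  field; nz.
apply: divr_gt0; last by apply: mulr_gt0; [apply: mulr_gt0|]; lra.
have -> : F * F * (G + H) - (F + E) * (F + E) * G = ((((1 * 10 + 2) * 10 + 7) * 10 + 0) + t * ((((6 * 10 + 6) * 10 + 5) * 10 + 6) + t * (((((1 * 10 + 3) * 10 + 8) * 10 + 1) * 10 + 1) + t * (((((1 * 10 + 5) * 10 + 7) * 10 + 2) * 10 + 2) + t * (((((1 * 10 + 1) * 10 + 0) * 10 + 1) * 10 + 7) + t * ((((4 * 10 + 9) * 10 + 2) * 10 + 8) + t * ((((1 * 10 + 3) * 10 + 8) * 10 + 4) + t * (((2 * 10 + 2) * 10 + 4) + t * (1 * 10 + 6))))))))).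
  rewrite eF eG eH eE eb ex; ring.
pp.
Qed.

Lemma L2 (t x b c E F G H : rat) : 0 <= t -> x = t + 2 -> b = 2 * x -> c = b + 1 ->
  E = c*x+1 -> F = x * (E+2) -> G = b*x*(E+1) + 2*E -> H = x * (E+1) ->
  1 + (x + 2 * cf [:: c; x])^-1 <
  (1 + (b + 2 * cf [:: x; c; x])^-1) ^+ 2.
Proof.
move=> t0 ex eb ec eE eF eG eH.
have x2 : 2 <= x by rewrite ex; lra.
have c5 : 5 <= c by rewrite ec eb; lra.
have b4 : 4 <= b by rewrite eb; lra.
have E0 : 0 < E by rewrite eE; apply: addr_gt0; [apply: mulr_gt0|]; lra.
have xE : 0 < x * E by apply: mulr_gt0; lra.
have F0 : 0 < F by rewrite eF; apply: mulr_gt0; lra.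
have G0 : 0 < G by rewrite eG; apply: addr_gt0; [apply: mulr_gt0; [apply: mulr_gt0|]|]; lra.
have H0 : 0 < H by rewrite eH; apply: mulr_gt0; lra.
have h1 : cf [:: c; x] = x / E.
  rewrite /= addr0 eE; field; nz.
have h2 : cf [:: x; c; x] = E / H.
  rewrite (_ : cf [:: x; c; x] = (x + cf [:: c; x])^-1) // h1 eH; field; nz.
rewrite h2 h1.
have -> : 1 + (x + 2 * (x / E))^-1 = (F + E) / F.
  rewrite eF; field; nz.
have -> : 1 + (b + 2 * (E / H))^-1 = (G + H) / G.
  rewrite eG eH; field; nz.
rewrite -subr_gt0.
have -> : ((G + H) / G) ^+ 2 - (F + E) / F = ((G + H) * (G + H) * F - G * G * (F + E)) / (G * G * F).
  field; nz.
apply: divr_gt0; last by apply: mulr_gt0; [apply: mulr_gt0|]; lra.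
have -> : (G + H) * (G + H) * F - G * G * (F + E) = ((((9 * 10 + 0) * 10 + 7) * 10 + 6) + t * (((((3 * 10 + 8) * 10 + 9) * 10 + 1) * 10 + 6) + t * (((((7 * 10 + 1) * 10 + 7) * 10 + 2) * 10 + 4) + t * (((((7 * 10 + 5) * 10 + 9) * 10 + 2) * 10 + 4) + t * (((((5 * 10 + 1) * 10 + 3) * 10 + 6) * 10 + 2) + t * (((((2 * 10 + 3) * 10 + 1) * 10 + 5) * 10 + 9) + t * ((((6 * 10 + 9) * 10 + 8) * 10 + 5) + t * ((((1 * 10 + 3) * 10 + 6) * 10 + 2) + t * (((1 * 10 + 5) * 10 + 6) + t * 8))))))))).
  rewrite eF eG eH eE ec eb ex; ring.
pp.
Qed.

Theorem lemma13 :
  (forall a : nat, (1 <= a)%N ->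
     cl1 a (2 * a + 1) > cr2 a (2 * a + 1) ^+ 2) /\
  (forall a : nat, (2 <= a)%N ->
     cr1 a (2 * a) < cl2 a (2 * a) ^+ 2).
Proof.
split.
- move=> a a1; rewrite /cl1 /cr2.
  have ex : (a%:R : rat) = (a - 1)%:R + 1 by rewrite -[in LHS](subnK a1) natrD.
  have ey : (a.+1%:R : rat) = a%:R + 1 by rewrite natr1.
  have eb : ((2 * a + 1)%:R : rat) = 2 * a%:R + 1 by rewrite natrD natrM.
  have HH := @L1 _ _ _ _ _ _ _ _ (ler0n _ _) ex ey eb erefl erefl erefl erefl. exact: HH.
- move=> a a2; rewrite /cl2 /cr1.
  have ex : (a%:R : rat) = (a - 2)%:R + 2 by rewrite -[in LHS](subnK a2) natrD.
  have eb : ((2 * a)%:R : rat) = 2 * a%:R by rewrite natrM.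
  have ec : ((2 * a).+1%:R : rat) = (2 * a)%:R + 1 by rewrite natr1.
  exact: (@L2 _ _ _ _ _ _ _ _ (ler0n _ _) ex eb ec erefl erefl erefl erefl).
Qed.
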